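(* Let $n\geq 2$, $0<\lambda<1$, $h(x,y)=(\lambda x,\lambda y)$, and let $f:\mathbb{R}^2\to\mathbb{R}^2$ be an orientation preserving homeomorphism with bounded displacement, with $f(0,0)=(0,0)$ as its only fixed point, such that $hfh^{-1}=f^n$. Let $A=\mathbb{R}^2\setminus\{(0,0)\}$ and $\tilde A$ its universal cover. Then there exist lifts $F,H:\tilde A\to\tilde A$ of $f|_A$ and $h|_A$ respectively such that $HFH^{-1}=F^n$.
   Context: Bounded displacement: there is $K>0$ with $|f(p)-p|\leq K$ for all $p\in\mathbb{R}^2$. *)

(* Defs.v *)
From Stdlib Require Import Reals.
Open Scope R_scope.

Definition pt : Type := (R * R)%type.
Definition origin : pt := (0, 0).
Definition padd (p q : pt) : pt := (fst p + fst q, snd p + snd q).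
Definition psub (p q : pt) : pt := (fst p - fst q, snd p - snd q).
Definition norm2 (p : pt) : R := sqrt (fst p ^ 2 + snd p ^ 2).
Definition dist2 (p q : pt) : R := norm2 (psub p q).

Definition cont2 (f : pt -> pt) : Prop :=
  forall x eps, 0 < eps -> exists del, 0 < del /\
    forall y, dist2 y x < del -> dist2 (f y) (f x) < eps.

Definition homeo2 (f : pt -> pt) : Prop :=
  cont2 f /\ exists g : pt -> pt, cont2 g /\
    (forall x, g (f x) = x) /\ (forall x, f (g x) = x).

Definition bounded_displacement (f : pt -> pt) : Prop :=
  exists K, 0 < K /\ forall p, dist2 (f p) p <= K.

(* Universal cover of A = R^2 \ {0}: the plane R^2 (coordinates (log r, theta))
   with covering map covA (s, t) = (e^s cos t, e^s sin t).
   Deck transformations: (s, t) |-> (s, t + 2 k pi). *)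
Definition covA (u : pt) : pt :=
  (exp (fst u) * cos (snd u), exp (fst u) * sin (snd u)).

Definition is_lift_A (g G : pt -> pt) : Prop :=
  cont2 G /\ forall u, covA (G u) = g (covA u).

Definition deck (u : pt) : pt := (fst u, snd u + 2 * PI).

(* Orientation preserving: at every point z, the local map
   w |-> f(z+w) - f(z) of A (well defined on A as f is injective)
   has local degree +1, i.e. admits a lift commuting with the deck generator. *)
Definition orientation_preserving (f : pt -> pt) : Prop :=
  forall z, exists G, is_lift_A (fun w => psub (f (padd z w)) (f z)) G /\
    forall u, G (deck u) = deck (G u).

Definition homot (lam : R) (p : pt) : pt := (lam * fst p, lam * snd p).
Definition homot_inv (lam : R) (p : pt) : pt := (fst p / lam, snd p / lam).

(* Main.v *)
Require Import Defs.
From Stdlib Require Import Reals Lra Lia.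
Open Scope R_scope.

Lemma norm2_lt x y d : Rabs x + Rabs y < d -> norm2 (x, y) < d.
Proof.
  intro H. unfold norm2; cbn [fst snd].
  apply Rle_lt_trans with (Rabs x + Rabs y); auto.
  rewrite <- (sqrt_pow2 (Rabs x + Rabs y)) by (pose proof (Rabs_pos x); pose proof (Rabs_pos y); lra).
  apply sqrt_le_1_alt.
  pose proof (Rabs_pos x); pose proof (Rabs_pos y).
  assert (x^2 = Rabs x ^2) by (rewrite pow2_abs; ring).
  assert (y^2 = Rabs y ^2) by (rewrite pow2_abs; ring).
  nra.
Qed.

Lemma abs_le_norm1 x y : Rabs x <= norm2 (x, y).
Proof.
  unfold norm2; cbn [fst snd]. rewrite <- sqrt_Rsqr_abs. apply sqrt_le_1_alt.
  unfold Rsqr. nra.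
Qed.

Lemma abs_le_norm2 x y : Rabs y <= norm2 (x, y).
Proof.
  unfold norm2; cbn [fst snd]. rewrite <- sqrt_Rsqr_abs. apply sqrt_le_1_alt.
  unfold Rsqr. nra.
Qed.

Lemma norm2_sq x y K : norm2 (x, y) <= K -> x^2 + y^2 <= K^2.
Proof.
  unfold norm2; cbn [fst snd]. intro H.
  assert (0 <= x^2 + y^2) by nra.
  pose proof (sqrt_sqrt _ H0). pose proof (sqrt_pos (x^2+y^2)). rewrite <- H1. set (s := sqrt (x^2+y^2)) in *. nra.
Qed.

Definition seg (u v : pt) (t : R) : pt :=
  (fst u + t * (fst v - fst u), snd u + t * (snd v - snd u)).

Lemma cont_path_gen (P : pt -> R) u v :
  (forall x eps, 0 < eps -> exists del, 0 < del /\
    forall y, dist2 y x < del -> Rabs (P y - P x) < eps) ->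
  continuity (fun t => P (seg u v t)).
Proof.
  intros HP t0. unfold continuity_pt, continue_in, limit1_in, limit_in.
  intros eps He. destruct (HP (seg u v t0) eps He) as [del [Hd H]].
  set (M := Rabs (fst v - fst u) + Rabs (snd v - snd u) + 1).
  assert (HM : 0 < M) by (unfold M; pose proof (Rabs_pos (fst v - fst u)); pose proof (Rabs_pos (snd v - snd u)); lra).
  exists (del / M). split. apply Rdiv_lt_0_compat; auto.
  intros x [_ Hx]. simpl in Hx |- *. unfold R_dist in *.
  apply H. unfold dist2, psub, seg; simpl.
  apply norm2_lt.
  replace (fst u + x * (fst v - fst u) - (fst u + t0 * (fst v - fst u))) with ((x - t0) * (fst v - fst u)) by ring.
  replace (snd u + x * (snd v - snd u) - (snd u + t0 * (snd v - snd u))) with ((x - t0) * (snd v - snd u)) by ring.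
  rewrite !Rabs_mult.
  assert (Rabs (x - t0) * M < del).
  { apply Rmult_lt_reg_r with (/ M). apply Rinv_0_lt_compat; auto.
    rewrite Rmult_assoc, Rinv_r by lra. rewrite Rmult_1_r. exact Hx. }
  unfold M in H0. pose proof (Rabs_pos (x - t0)). nra.
Qed.

Lemma cont_snd (F : pt -> pt) u v : cont2 F -> continuity (fun t => snd (F (seg u v t))).
Proof.
  intro HF. apply (cont_path_gen (fun p => snd (F p))).
  intros x eps He. destruct (HF x eps He) as [del [Hd H]]. exists del; split; auto.
  intros y Hy. specialize (H y Hy). unfold dist2, psub in H.
  eapply Rle_lt_trans; [apply abs_le_norm2|]. exact H.
Qed.

Lemma cont_comp F G : cont2 F -> cont2 G -> cont2 (fun u => F (G u)).
Proof.
  intros HF HG x eps He. destruct (HF (G x) eps He) as [d1 [Hd1 H1]].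
  destruct (HG x d1 Hd1) as [d2 [Hd2 H2]]. exists d2; split; auto.
Qed.

Lemma cont_shift (a b : R) : cont2 (fun u => (fst u + a, snd u + b)).
Proof.
  intros x eps He. exists eps; split; auto. intros y Hy.
  unfold dist2, psub in *; simpl.
  replace (fst y + a - (fst x + a)) with (fst y - fst x) by ring.
  replace (snd y + b - (snd x + b)) with (snd y - snd x) by ring. exact Hy.
Qed.

Lemma cont_iter F n : cont2 F -> cont2 (Nat.iter n F).
Proof.
  intro HF. induction n as [|n IH]; simpl.
  - intros x eps He. exists eps; auto.
  - apply (cont_comp F (Nat.iter n F)); auto.
Qed.

Lemma cont_diff (P Q : pt -> pt) u v : cont2 P -> cont2 Q ->
  continuity (fun t => snd (P (seg u v t)) - snd (Q (seg u v t))).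
Proof.
  intros HP HQ. apply continuity_minus; apply cont_snd; auto.
Qed.

Lemma trig_shift k x : cos (x + 2 * IZR k * PI) = cos x /\ sin (x + 2 * IZR k * PI) = sin x.
Proof.
  assert (Hs : sin (IZR k * PI) = 0) by (apply sin_eq_0_1; exists k; ring).
  assert (Hc : cos (2 * IZR k * PI) = 1).
  { replace (2 * IZR k * PI) with (2 * (IZR k * PI)) by ring. rewrite cos_2a_sin, Hs. ring. }
  assert (Hs2 : sin (2 * IZR k * PI) = 0).
  { replace (2 * IZR k * PI) with (2 * (IZR k * PI)) by ring. rewrite sin_2a, Hs. ring. }
  rewrite cos_plus, sin_plus, Hc, Hs2. split; ring.
Qed.

Lemma covA_eq a b : covA a = covA b -> fst a = fst b /\ cos (snd a - snd b) = 1.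
Proof.
  unfold covA. intro H. injection H as H1 H2.
  pose proof (exp_pos (fst a)). pose proof (exp_pos (fst b)).
  pose proof (sin2_cos2 (snd a)). pose proof (sin2_cos2 (snd b)). unfold Rsqr in *.
  assert (Hsq : exp (fst a) * exp (fst a) = exp (fst b) * exp (fst b)).
  { transitivity ((exp (fst a) * cos (snd a))^2 + (exp (fst a) * sin (snd a))^2).
    nra. rewrite H1, H2. nra. }
  assert (He : exp (fst a) = exp (fst b)) by nra.
  split. apply exp_inv; auto.
  rewrite He in H1, H2.
  assert (cos (snd a) = cos (snd b)) by (apply Rmult_eq_reg_l with (exp (fst b)); lra).
  assert (sin (snd a) = sin (snd b)) by (apply Rmult_eq_reg_l with (exp (fst b)); lra).
  rewrite cos_minus, H5, H6. lra.
Qed.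

Lemma cos_small x a : 0 < a <= PI -> -PI <= x <= PI -> cos a < cos x -> Rabs x < a.
Proof.
  intros Ha Hx Hc. destruct (Rle_or_lt 0 x).
  - rewrite Rabs_right by lra. apply (cos_decreasing_0 a x); lra.
  - rewrite Rabs_left by lra. rewrite <- (cos_neg x) in Hc. apply (cos_decreasing_0 a (-x)); lra.
Qed.

Lemma cos_one x : cos x = 1 -> Rabs x < PI -> x = 0.
Proof.
  intros Hc Hx. destruct (Req_dec x 0); auto. exfalso.
  assert (cos (Rabs x) < cos 0).
  { apply cos_decreasing_1; try lra; pose proof PI_RGT_0; try lra.
    pose proof (Rabs_pos x). lra.
    destruct (Rcase_abs x); [rewrite Rabs_left|rewrite Rabs_right]; lra. }
  rewrite cos_0 in H0.
  destruct (Rcase_abs x); [rewrite Rabs_left in H0 by lra; rewrite cos_neg in H0|rewrite Rabs_right in H0 by lra]; lra.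
Qed.

Lemma ivt_bound (g : R -> R) a : continuity g -> 0 < a <= PI -> Rabs (g 0) < a ->
  (forall t, 0 <= t <= 1 -> cos a < cos (g t)) -> Rabs (g 1) < a.
Proof.
  intros Hg Ha H0 Ht. destruct (Rlt_or_le (Rabs (g 1)) a) as [|Hge]; auto. exfalso.
  destruct (Rcase_abs (g 1)) as [Hn|Hp].
  - rewrite Rabs_left in Hge by lra.
    destruct (IVT_cor (fun t => g t + a) 0 1) as [z [Hz Hz0]].
    + apply continuity_plus; auto. apply continuity_const. intros ? ?; auto.
    + lra.
    + apply Rabs_def2 in H0. nra.
    + specialize (Ht z Hz). replace (g z) with (- a) in Ht by lra. rewrite cos_neg in Ht. lra.
  - rewrite Rabs_right in Hge by lra.
    destruct (IVT_cor (fun t => g t - a) 0 1) as [z [Hz Hz0]].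
    + apply continuity_minus; auto. apply continuity_const. intros ? ?; auto.
    + lra.
    + apply Rabs_def2 in H0. nra.
    + specialize (Ht z Hz). replace (g z) with a in Ht by lra. lra.
Qed.

Lemma step_bound (K s s' t t' : R) : 0 < K ->
  (exp s' * cos t' - exp s * cos t)^2 + (exp s' * sin t' - exp s * sin t)^2 <= K^2 ->
  Rabs (exp s' - exp s) <= K /\ (2 * K <= exp s -> (exp s)^2 * (1 - cos (t' - t)) <= K^2).
Proof.
  intros HK H. set (a := exp s') in *. set (b := exp s) in *.
  assert (Ha : 0 < a) by apply exp_pos. assert (Hb : 0 < b) by apply exp_pos.
  assert (E : (a * cos t' - b * cos t)^2 + (a * sin t' - b * sin t)^2 = a^2 + b^2 - 2*a*b*cos (t' - t)).
  { rewrite cos_minus.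
    assert (e1 : sin t ^2 + cos t ^2 = 1) by (rewrite <- (sin2_cos2 t); unfold Rsqr; ring).
    assert (e2 : sin t' ^2 + cos t' ^2 = 1) by (rewrite <- (sin2_cos2 t'); unfold Rsqr; ring).
    transitivity (a^2*(sin t'^2+cos t'^2) + b^2*(sin t^2 + cos t^2) - 2*a*b*(cos t' * cos t + sin t' * sin t)); [ring|rewrite e1, e2; ring]. }
  rewrite E in H. pose proof (COS_bound (t' - t)) as [C1 C2].
  assert (P1 : 0 <= a*b*(1 - cos(t'-t))) by (apply Rmult_le_pos; nra).
  assert (Hab : (a - b)^2 <= K^2) by nra.
  split.
  - destruct (Rcase_abs (a - b)); [rewrite Rabs_left by lra|rewrite Rabs_right by lra]; nra.
  - intro HbK. assert (a - b >= - K).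
    { destruct (Rle_or_lt (a - b) (-K)); [|lra]. nra. }
    assert (Q: b*(1-cos(t'-t)) * b <= b*(1-cos(t'-t))*(2*a)) by (apply Rmult_le_compat_l; nra).
    pose proof (pow2_ge_0 (a-b)). nra.
Qed.

Lemma exp_le x y : x <= y -> exp x <= exp y.
Proof. intro H. destruct (Rle_lt_or_eq _ _ H). left; apply exp_increasing; auto. subst; lra. Qed.

Lemma cont_tshift c : cont2 (fun u => (fst u, snd u + c)).
Proof.
  intros x eps He. exists eps; split; auto. intros y Hy.
  unfold dist2, psub in *; simpl.
  replace (snd y + c - (snd x + c)) with (snd y - snd x) by ring. exact Hy.
Qed.

Lemma cont_fshift a : cont2 (fun u => (fst u + a, snd u)).
Proof.
  intros x eps He. exists eps; split; auto. intros y Hy.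
  unfold dist2, psub in *; simpl.
  replace (fst y + a - (fst x + a)) with (fst y - fst x) by ring. exact Hy.
Qed.

Lemma cont_id : cont2 (fun u => u).
Proof. intros x eps He. exists eps; auto. Qed.

Lemma seg0 u v : seg u v 0 = u.
Proof. destruct u; unfold seg; simpl; f_equal; ring. Qed.
Lemma seg1 u v : seg u v 1 = v.
Proof. destruct u, v; unfold seg; simpl; f_equal; ring. Qed.

Lemma iter_lift f F : (forall u, covA (F u) = f (covA u)) ->
  forall n u, covA (Nat.iter n F u) = Nat.iter n f (covA u).
Proof. intros HF n u. induction n; simpl; auto. rewrite HF, IHn. auto. Qed.

Theorem mainTheorem12 (n : nat) (lam : R) (f : pt -> pt) :
  (2 <= n)%nat ->
  0 < lam < 1 ->
  homeo2 f ->
  orientation_preserving f ->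
  bounded_displacement f ->
  (forall p, f p = p <-> p = origin) ->
  (forall p, homot lam (f (homot_inv lam p)) = Nat.iter n f p) ->
  exists F H Hinv : pt -> pt,
    is_lift_A f F /\ is_lift_A (homot lam) H /\
    (forall u, H (Hinv u) = u /\ Hinv (H u) = u) /\
    (forall u, H (F (Hinv u)) = Nat.iter n F u).
Proof.
  intros Hn Hlam _ Hop Hbd Hfix Hconj.
  assert (f0 : f origin = origin) by (apply Hfix; reflexivity).
  destruct (Hop origin) as [G [[HGc HGl] _]].
  assert (HG : forall u, covA (G u) = f (covA u)).
  { intro u. rewrite HGl, f0. unfold psub, padd, origin. destruct (covA u) as [x y]. cbn [fst snd].
    replace (0 + x) with x by ring. replace (0 + y) with y by ring.
    destruct (f (x, y)); cbn [fst snd]. f_equal; ring. }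
  destruct Hbd as [K [HK HKb]].
  assert (Hdisp : forall F, (forall u, covA (F u) = f (covA u)) -> forall u,
     Rabs (exp (fst (F u)) - exp (fst u)) <= K /\
     (2*K <= exp (fst u) -> exp (fst u)^2 * (1 - cos (snd (F u) - snd u)) <= K^2)).
  { intros F HF u. specialize (HKb (covA u)). rewrite <- HF in HKb.
    unfold dist2, psub, covA in HKb. cbn [fst snd] in HKb. apply norm2_sq in HKb.
    apply step_bound; auto. }
  assert (HPI := PI_RGT_0).
  assert (Hn1 : 2 <= INR n) by (replace 2 with (INR 2) by (simpl; ring); apply le_INR; auto).
  set (al := PI / (INR n + 1)).
  assert (Hal : 0 < al <= PI).
  { unfold al. split. apply Rdiv_lt_0_compat; lra.
    apply Rmult_le_reg_r with (INR n + 1). lra. unfold Rdiv. rewrite Rmult_assoc, Rinv_l by lra. nra. }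
  assert (Hal2 : (INR n + 1) * al = PI) by (unfold al; field; lra).
  set (de := 1 - cos al).
  assert (Hde : 0 < de).
  { unfold de. assert (cos al < cos 0) by (apply cos_decreasing_1; lra). rewrite cos_0 in H. lra. }
  set (B := 2*K + K/de).
  assert (HB : 2*K <= B /\ K <= B * de).
  { unfold B. split. assert (0 < K/de) by (apply Rdiv_lt_0_compat; lra). lra.
    replace ((2*K + K/de)*de) with (2*K*de + K) by (field; lra). nra. }
  assert (Hfar : forall F, (forall u, covA (F u) = f (covA u)) -> forall u,
     B < exp (fst u) -> cos al < cos (snd (F u) - snd u)).
  { intros F HF u Hu. destruct (Hdisp F HF u) as [_ H2]. specialize (H2 ltac:(lra)).
    set (b := exp (fst u)) in *. set (c := cos (snd (F u) - snd u)) in *.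
    assert (b * de >= K) by nra.
    assert (b^2 * de > K^2) by nra.
    unfold de in *. nra. }
  set (u0 := (B, 0)).
  assert (Hu0 : B < exp (fst u0)).
  { simpl. assert (B <> 0) by lra. pose proof (exp_ineq1 B H). lra. }
  set (D0 := snd (G u0) - snd u0).
  set (N := up ((D0 - PI) / (2 * PI))).
  destruct (archimed ((D0 - PI) / (2 * PI))) as [A1 A2]. fold N in A1, A2.
  set (c := 2 * IZR (- N) * PI).
  set (F := fun u => (fst (G u), snd (G u) + c)).
  assert (HF : forall u, covA (F u) = f (covA u)).
  { intro u. rewrite <- HG. unfold F, covA, c. cbn [fst snd].
    destruct (trig_shift (-N) (snd (G u))) as [E1 E2]. rewrite E1, E2. auto. }
  assert (HFc : cont2 F) by (apply (cont_comp (fun p => (fst p, snd p + c)) G); auto; apply cont_tshift).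
  assert (Hd0 : Rabs (snd (F u0) - snd u0) < al).
  { apply cos_small; [exact Hal| |].
    - unfold F, c. cbn [fst snd]. rewrite opp_IZR. fold D0.
      assert (E : snd (G u0) + 2 * - IZR N * PI - snd u0 = D0 - 2 * PI * IZR N) by (unfold D0; ring).
      rewrite E.
      assert (X1 : 2 * PI * IZR N > D0 - PI).
      { apply Rmult_gt_compat_l with (r := 2*PI) in A1; [|lra].
        replace (2 * PI * ((D0 - PI) / (2 * PI))) with (D0 - PI) in A1 by (field; lra). lra. }
      assert (X2 : 2 * PI * IZR N <= D0 + PI).
      { assert (IZR N <= (D0 - PI) / (2*PI) + 1) by lra.
        apply Rmult_le_compat_l with (r := 2*PI) in H; [|lra].
        replace (2 * PI * ((D0 - PI) / (2 * PI) + 1)) with (D0 + PI) in H by (field; lra). lra. }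
      lra.
    - apply Hfar; auto. }
  assert (Hall : forall v, B < exp (fst v) -> Rabs (snd (F v) - snd v) < al).
  { intros v Hv.
    pose proof (ivt_bound (fun t => snd (F (seg u0 v t)) - snd ((fun x => x) (seg u0 v t))) al) as I.
    cbv beta in I. rewrite seg0, seg1 in I. apply I; auto.
    - exact (cont_diff F (fun x => x) u0 v HFc cont_id).
    - intros t Ht. apply Hfar; auto. unfold seg; cbn [fst snd].
      destruct (Rle_or_lt (fst u0) (fst v)).
      + eapply Rlt_le_trans; [exact Hu0|]. apply exp_le. nra.
      + eapply Rlt_le_trans; [exact Hv|]. apply exp_le. nra. }
  set (l := ln lam).
  set (H := fun u : pt => (fst u + l, snd u)).
  set (Hinv := fun u : pt => (fst u - l, snd u)).
  assert (Hl : exp l = lam) by (apply exp_ln; lra).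
  assert (HH : forall u, covA (H u) = homot lam (covA u)).
  { intro u. unfold H, covA, homot. cbn [fst snd]. rewrite exp_plus, Hl. f_equal; ring. }
  assert (HHi : forall u, covA (Hinv u) = homot_inv lam (covA u)).
  { intro u. unfold Hinv, covA, homot_inv. cbn [fst snd]. unfold Rminus. rewrite exp_plus, exp_Ropp, Hl.
    f_equal; field; lra. }
  assert (HHc : cont2 H) by apply cont_fshift.
  assert (HHic : cont2 Hinv) by apply (cont_fshift (-l)).
  exists F, H, Hinv. split; [split; auto|]. split; [split; auto|]. split.
  { intro u. unfold H, Hinv; destruct u; cbn [fst snd]. split; f_equal; ring. }
  set (T := fun u => H (F (Hinv u))).
  set (P := Nat.iter n F).
  assert (HTP : forall u, covA (T u) = covA (P u)).
  { intro u. unfold T, P. rewrite HH, HF, HHi, Hconj. symmetry. apply iter_lift; auto. }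
  assert (HTc : cont2 T) by (apply (cont_comp H (fun u => F (Hinv u))); auto; apply (cont_comp F Hinv); auto).
  assert (HPc : cont2 P) by (apply cont_iter; auto).
  set (u1 := (B + INR n * K, 0)).
  assert (Hu1 : B + INR n * K < exp (fst u1)).
  { simpl. assert (0 < B + INR n * K) by nra. assert (B + INR n * K <> 0) by lra.
    pose proof (exp_ineq1 _ H1). lra. }
  assert (Hit : forall i, (i <= n)%nat -> B + (INR n - INR i) * K < exp (fst (Nat.iter i F u1)) /\ Rabs (snd (Nat.iter i F u1) - snd u1) <= INR i * al).
  { induction i as [|i IH]; intro Hi.
    - change (Nat.iter 0 F u1) with u1. change (INR 0) with 0. split.
      + replace (INR n - 0) with (INR n) by ring. exact Hu1.
      + replace (snd u1 - snd u1) with 0 by ring. rewrite Rabs_R0. lra.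
    - destruct (IH ltac:(lia)) as [I1 I2].
      assert (Hin : INR i + 1 <= INR n) by (rewrite <- S_INR; apply le_INR; auto).
      set (v := Nat.iter i F u1) in *.
      assert (Hvf : B < exp (fst v)) by nra.
      pose proof (Hall v Hvf) as Hd. destruct (Hdisp F HF v) as [Hk _].
      change (Nat.iter (S i) F u1) with (F v). rewrite S_INR. split.
      + destruct (Rcase_abs (exp (fst (F v)) - exp (fst v))); [rewrite Rabs_left in Hk by lra|rewrite Rabs_right in Hk by lra]; nra.
      + replace (snd (F v) - snd u1) with ((snd (F v) - snd v) + (snd v - snd u1)) by ring.
        eapply Rle_trans; [apply Rabs_triang|]. lra. }
  destruct (Hit n (le_n n)) as [_ Hn2]. fold P in Hn2.
  assert (Hfar1 : B < exp (fst (Hinv u1))).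
  { unfold Hinv. cbn [fst]. unfold Rminus. rewrite exp_plus, exp_Ropp, Hl.
    assert (0 < exp (fst u1)) by apply exp_pos.
    assert (exp (fst u1) <= exp (fst u1) * / lam).
    { rewrite <- (Rmult_1_r (exp (fst u1))) at 1. apply Rmult_le_compat_l. lra.
      rewrite <- Rinv_1. apply Rinv_le_contravar; lra. }
    assert (0 <= INR n * K) by nra. lra. }
  assert (He1 : snd (T u1) - snd (P u1) = 0).
  { destruct (covA_eq _ _ (HTP u1)) as [_ Hc]. apply cos_one; auto.
    pose proof (Hall _ Hfar1) as Hd.
    assert (E : snd (T u1) - snd (P u1) = (snd (F (Hinv u1)) - snd (Hinv u1)) - (snd (P u1) - snd u1)) by (unfold T, H, Hinv; cbn [fst snd]; ring).
    rewrite E. unfold Rminus at 1. eapply Rle_lt_trans; [apply Rabs_triang|]. rewrite Rabs_Ropp.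
    fold (Rminus (snd (F (Hinv u1))) (snd (Hinv u1))). nra. }
  intro u.
  assert (Hfst : fst (T u) = fst (P u)) by (apply (covA_eq _ _ (HTP u))).
  assert (Hsnd : snd (T u) - snd (P u) = 0).
  { destruct (covA_eq _ _ (HTP u)) as [_ Hc]. apply cos_one; auto.
    pose proof (ivt_bound (fun t => snd (T (seg u1 u t)) - snd (P (seg u1 u t))) (PI/2)) as I.
    cbv beta in I. rewrite seg0, seg1 in I.
    enough (Rabs (snd (T u) - snd (P u)) < PI/2) by lra. apply I.
    - exact (cont_diff T P u1 u HTc HPc).
    - lra.
    - rewrite He1, Rabs_R0. lra.
    - intros t _. rewrite cos_PI2. destruct (covA_eq _ _ (HTP (seg u1 u t))) as [_ Hc']. lra. }
  change (T u = P u). rewrite (surjective_pairing (T u)), (surjective_pairing (P u)).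
  f_equal; lra.
Qed.
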